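(* Let $E$ be an exact Courant algebroid over $M$ with a generalized Riemannian metric $g_\tau$, and identify $T^*M$ with $\rho^*(T^*M)\subset E$. For real maximally isotropic subbundles $D,D'\subset E$ let $S,S'\in\Gamma(\mathrm{End}\,T^*M)$ be the unique endomorphisms such that $D_x=\{(1+\tau)\eta+(1-\tau)S\eta:\eta\in T^*_xM\}$ and $D'_x=\{(1+\tau)\eta+(1-\tau)S'\eta:\eta\in T^*_xM\}$ for all $x\in M$ (these operators are invertible). Then $D\cap D'=\{0\}$ if and only if $S^{-1}S'-1$ is nondegenerate (at every point).
   Context: A Courant algebroid is a vector bundle $E\to M$ with anchor $\rho\colon E\to TM$, bracket on $\Gamma(E)$ and nondegenerate symmetric fiber metric $(\cdot,\cdot)$ satisfying: $[\psi,f\psi']=f[\psi,\psi']+(\rho(\psi)f)\psi'$; $[\psi_1,[\psi_2,\psi_3]]=[[\psi_1,\psi_2],\psi_3]+[\psi_2,[\psi_1,\psi_3]]$; $\rho(\psi_1)(\psi_2,\psi_3)=([\psi_1,\psi_2],\psi_3)+(\psi_2,[\psi_1,\psi_3])$; $([\psi,\psi],\psi')=\tfrac12\rho(\psi')(\psi,\psi)$. With $\rho^*\colon T^*M\to E$ defined by $(\rho^*\alpha,\psi)=\langle\alpha,\rho(\psi)\rangle$, $E$ is exact if $0\to T^*M\to E\to TM\to 0$ is exact. A generalized Riemannian metric is a positive definite fiber metric $g_\tau(\psi_1,\psi_2)=(\tau\psi_1,\psi_2)$ with $\tau\in\Gamma(\mathrm{End}\,E)$, $\tau^2=1$. A subbundle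 is maximally isotropic if isotropic for $(\cdot,\cdot)$ and of maximal rank. *)

(* Defs.v *)
(* Fiberwise (pointwise) linear-algebra model of an exact
   Courant algebroid with a generalized Riemannian metric. *)
From HB Require Import structures.
From mathcomp Require Import all_boot all_order all_algebra.
Set Implicit Arguments. Unset Strict Implicit. Unset Printing Implicit Defensive.
Import Order.TTheory GRing.Theory Num.Theory.
Local Open Scope ring_scope.

(* The fiber E_x is 'rV[R]_m; T_xM and T*_xM are 'rV[R]_n, with the duality
   pairing <alpha, v> = alpha *m v^T.  Endomorphisms act on row vectors on the
   right: (A psi) is written psi *m A.  The fiber metric (.,.) has Gram
   matrix G. *)

Definition cform {R : realFieldType} {m : nat} (G : 'M[R]_m) (u v : 'rV[R]_m) : R :=
  (u *m G *m v^T) 0 0.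

(* rho : E_x -> T_xM is psi |-> psi *m rho.  rho^* : T*_xM -> E_x is defined by
   (rho^* alpha, psi) = <alpha, rho psi>, i.e. rho^* alpha = alpha rho^T G^{-1}. *)
Definition rho_star {R : realFieldType} {m n : nat} (G : 'M[R]_m) (rho : 'M[R]_(m, n))
  (alpha : 'rV[R]_n) : 'rV[R]_m := alpha *m rho^T *m invmx G.

Definition nondeg_sym_form {R : realFieldType} {m : nat} (G : 'M[R]_m) : Prop :=
  G^T = G /\ G \in unitmx.

(* exactness of 0 -> T*M --rho^*--> E --rho--> TM -> 0 at the fiber *)
Definition exact_fiber {R : realFieldType} {m n : nat} (G : 'M[R]_m) (rho : 'M[R]_(m, n)) : Prop :=
  [/\ (forall alpha : 'rV[R]_n, rho_star G rho alpha = 0 -> alpha = 0),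
      (forall psi : 'rV[R]_m, psi *m rho = 0 <-> exists alpha, psi = rho_star G rho alpha)
    & (forall w : 'rV[R]_n, exists psi : 'rV[R]_m, psi *m rho = w)].

(* generalized Riemannian metric g_tau(psi1,psi2) = (tau psi1, psi2),
   tau^2 = 1, g_tau a positive definite (symmetric) fiber metric *)
Definition gen_riem_metric {R : realFieldType} {m : nat} (G tau : 'M[R]_m) : Prop :=
  [/\ tau *m tau = 1%:M,
      (forall u v : 'rV[R]_m, cform G (u *m tau) v = cform G (v *m tau) u)
    & (forall u : 'rV[R]_m, u != 0 -> 0 < cform G (u *m tau) u)].

(* subspaces of the fiber are row spaces of square matrices (mxalgebra) *)
Definition isotropic {R : realFieldType} {m : nat} (G : 'M[R]_m) (D : 'M[R]_m) : Prop :=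
  forall u v : 'rV[R]_m, (u <= D)%MS -> (v <= D)%MS -> cform G u v = 0.

Definition max_isotropic {R : realFieldType} {m : nat} (G : 'M[R]_m) (D : 'M[R]_m) : Prop :=
  isotropic G D /\ (forall D' : 'M[R]_m, isotropic G D' -> (\rank D' <= \rank D)%N).

Definition graph_rep {R : realFieldType} {m n : nat} (G tau : 'M[R]_m) (rho : 'M[R]_(m, n))
  (S : 'M[R]_n) (D : 'M[R]_m) : Prop :=
  forall u : 'rV[R]_m, (u <= D)%MS <->
    exists eta : 'rV[R]_n,
      u = rho_star G rho eta *m (1%:M + tau) + rho_star G rho (eta *m S) *m (1%:M - tau).

(* Main.v *)
Require Import Defs.
From HB Require Import structures.
From mathcomp Require Import all_boot all_order all_algebra.
Import Order.TTheory GRing.Theory Num.Theory.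
Local Open Scope ring_scope.

Lemma unit_kerP (R : realFieldType) n (A : 'M[R]_n) :
  A \notin unitmx -> exists2 v : 'rV_n, v != 0 & v *m A = 0.
Proof. by rewrite unitmxE unitfE negbK => /det0P. Qed.

Lemma unit_ker0 (R : realFieldType) n (A : 'M[R]_n) (v : 'rV_n) :
  A \in unitmx -> v *m A = 0 -> v = 0.
Proof. by move=> Au vA; rewrite -(mulmxK Au v) vA mul0mx. Qed.

Lemma rho_starB (R : realFieldType) m n (G : 'M[R]_m) (rho : 'M[R]_(m, n)) a b :
  rho_star G rho (a - b) = rho_star G rho a - rho_star G rho b.
Proof. by rewrite /rho_star !mulmxBl. Qed.

Lemma iso_T (R : realFieldType) m n (G : 'M[R]_m) (rho : 'M[R]_(m, n)) w :
  G \in unitmx -> exact_fiber G rho -> cform G (rho_star G rho w) (rho_star G rho w) = 0.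
Proof.
move=> Gu [_ ex _].
have vr : rho_star G rho w *m rho = 0 by apply/ex; exists w.
rewrite /cform {1}/rho_star (mulmxKV Gu) -mulmxA -trmx_mul vr trmx0 mulmx0 mxE.
done.
Qed.

Lemma keyP (R : realFieldType) m n (G tau : 'M[R]_m) (rho : 'M[R]_(m, n)) w :
  G \in unitmx -> exact_fiber G rho -> gen_riem_metric G tau ->
  rho_star G rho w *m (1%:M + tau) = 0 -> w = 0.
Proof.
move=> Gu ef [hT _ pos] h.
have iso := @iso_T R m n G rho w Gu ef.
have [inj _ _] := ef.
apply: inj.
set v := rho_star G rho w in h iso *.
have vt : v *m tau = - v.
  by apply/eqP; rewrite -addr_eq0 addrC; move: h; rewrite mulmxDr mulmx1 => ->.
apply/eqP; apply/negPn/negP => nz.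
have := pos v nz; rewrite vt /cform !mulNmx mxE.
by move: iso; rewrite /cform => ->; rewrite oppr0 ltxx.
Qed.

Lemma keyQ (R : realFieldType) m n (G tau : 'M[R]_m) (rho : 'M[R]_(m, n)) w :
  G \in unitmx -> exact_fiber G rho -> gen_riem_metric G tau ->
  rho_star G rho w *m (1%:M - tau) = 0 -> w = 0.
Proof.
move=> Gu ef [hT _ pos] h.
have iso := @iso_T R m n G rho w Gu ef.
have [inj _ _] := ef.
apply: inj.
set v := rho_star G rho w in h iso *.
have vt : v *m tau = v.
  by apply/eqP; rewrite eq_sym -subr_eq0; move: h; rewrite mulmxBr mulmx1 => ->.
apply/eqP; apply/negPn/negP => nz.
have := pos v nz; rewrite vt.
by rewrite iso ltxx.
Qed.

Lemma PP (R : realFieldType) m (tau : 'M[R]_m) : tau *m tau = 1%:M ->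
  (1%:M + tau) *m (1%:M + tau) = (1%:M + tau) *+ 2.
Proof.
move=> hT; rewrite mulmxDl mulmxDr !mul1mx mulmxDr mulmx1 hT.
rewrite mulr2n; congr (_ + _); exact: addrC.
Qed.

Lemma QP (R : realFieldType) m (tau : 'M[R]_m) : tau *m tau = 1%:M ->
  (1%:M - tau) *m (1%:M + tau) = 0.
Proof.
move=> hT; rewrite mulmxBl mulmxDr !mul1mx mulmxDr mulmx1 hT.
by rewrite opprD addrA addrK subrr.
Qed.

Lemma QQ (R : realFieldType) m (tau : 'M[R]_m) : tau *m tau = 1%:M ->
  (1%:M - tau) *m (1%:M - tau) = (1%:M - tau) *+ 2.
Proof.
move=> hT; rewrite mulmxBl mulmxBr !mul1mx mulmxBr mulmx1 hT.
by rewrite mulr2n opprB.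
Qed.

Lemma PQ (R : realFieldType) m (tau : 'M[R]_m) : tau *m tau = 1%:M ->
  (1%:M + tau) *m (1%:M - tau) = 0.
Proof.
move=> hT; rewrite mulmxDl mulmxBr !mul1mx mulmxBr mulmx1 hT.
by rewrite addrA subrK subrr.
Qed.

Lemma twice0 (R : realFieldType) m n (x : 'M[R]_(m, n)) : x *+ 2 = 0 -> x = 0.
Proof.
move=> h; apply/matrixP => i j; move/matrixP: h => /(_ i j).
rewrite mulmxnE mxE => /eqP; rewrite mulrn_eq0 /= => /eqP ->.
by [].
Qed.


Lemma decompP (R : realFieldType) m (tau : 'M[R]_m) (a b : 'rV[R]_m) :
  tau *m tau = 1%:M ->
  (a *m (1%:M + tau) + b *m (1%:M - tau)) *m (1%:M + tau) = (a *m (1%:M + tau)) *+ 2.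
Proof.
move=> hT; rewrite mulmxDl -!mulmxA PP // QP // mulmx0 addr0.
by rewrite (raddfMn (mulmx a)).
Qed.

Lemma decompQ (R : realFieldType) m (tau : 'M[R]_m) (a b : 'rV[R]_m) :
  tau *m tau = 1%:M ->
  (a *m (1%:M + tau) + b *m (1%:M - tau)) *m (1%:M - tau) = (b *m (1%:M - tau)) *+ 2.
Proof.
move=> hT; rewrite mulmxDl -!mulmxA QQ // PQ // mulmx0 add0r.
by rewrite (raddfMn (mulmx b)).
Qed.

Lemma twice_inj (R : realFieldType) m n (x y : 'M[R]_(m, n)) : x *+ 2 = y *+ 2 -> x = y.
Proof.
move=> h; apply/eqP; rewrite -subr_eq0; apply/eqP/twice0.
by rewrite mulrnBl h subrr.
Qed.

Theorem mainTheorem12 (R : realFieldType) (m n : nat)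
  (G tau : 'M[R]_m) (rho : 'M[R]_(m, n)) (D D' : 'M[R]_m) (S S' : 'M[R]_n) :
  nondeg_sym_form G ->
  exact_fiber G rho ->
  gen_riem_metric G tau ->
  max_isotropic G D -> max_isotropic G D' ->
  graph_rep G tau rho S D -> graph_rep G tau rho S' D' ->
  [/\ S \in unitmx, S' \in unitmx &
      ((forall u : 'rV[R]_m, (u <= D)%MS -> (u <= D')%MS -> u = 0) <->
       (S' *m invmx S - 1%:M) \in unitmx)].
Proof.
move=> [GT Gu] ef gr [isoD _] [isoD' _] rD rD'.
have [hT _ pos] := gr.
have Sunit : forall (S0 : 'M[R]_n) D0, isotropic G D0 -> graph_rep G tau rho S0 D0 -> S0 \in unitmx.
  move=> S0 D0 iso rep; apply/negPn/negP => /unit_kerP [w wn wS].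
  set u := rho_star G rho w *m (1%:M + tau).
  have uD : (u <= D0)%MS by apply/rep; exists w; rewrite wS /rho_star !mul0mx addr0.
  have un : u != 0.
    by apply/negP => /eqP /(@keyP R m n G tau rho _ Gu ef gr) /eqP; rewrite (negbTE wn).
  have := pos u un.
  have -> : u *m tau = u by rewrite /u -mulmxA mulmxDl mul1mx hT addrC.
  by rewrite (iso u u uD uD) ltxx.
have Su := Sunit S D isoD rD.
have Su' := Sunit S' D' isoD' rD'.
split => //; split.
  move=> H; apply/negPn/negP => /unit_kerP [w wn wM].
  have wSS : w *m S' = w *m S.
    move: wM; rewrite mulmxBr mulmx1 => /eqP; rewrite subr_eq0 => /eqP e.
    have := congr1 (mulmx^~ S) e; rewrite /= mulmxA (mulmxKV Su) => ->; done.
  set u := rho_star G rho w *m (1%:M + tau) + rho_star G rho (w *m S) *m (1%:M - tau).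
  have uD : (u <= D)%MS by apply/rD; exists w.
  have uD' : (u <= D')%MS by apply/rD'; exists w; rewrite wSS.
  have u0 := H u uD uD'.
  have := @decompP R m tau (rho_star G rho w) (rho_star G rho (w *m S)) hT.
  rewrite -/u u0 mul0mx => /esym /twice0 /(@keyP R m n G tau rho _ Gu ef gr) /eqP.
  by rewrite (negbTE wn).
move=> Mu u /rD [e ->] /rD' [e' E].
have hP := @decompP R m tau (rho_star G rho e) (rho_star G rho (e *m S)) hT.
have hQ := @decompQ R m tau (rho_star G rho e) (rho_star G rho (e *m S)) hT.
rewrite E decompP // in hP; rewrite E decompQ // in hQ.
move/twice_inj: hP => hP; move/twice_inj: hQ => hQ.
have ee : e' = e.
  apply/eqP; rewrite -subr_eq0; apply/eqP; apply: (@keyP R m n G tau rho _ Gu ef gr).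
  by rewrite rho_starB mulmxBl hP subrr.
subst e'.
have eS : e *m S' = e *m S.
  apply/eqP; rewrite -subr_eq0; apply/eqP; apply: (@keyQ R m n G tau rho _ Gu ef gr).
  by rewrite rho_starB mulmxBl hQ subrr.
have e0 : e = 0.
  apply: (@unit_ker0 R n _ e Mu).
  by rewrite mulmxBr mulmx1 mulmxA eS (mulmxK Su) subrr.
by rewrite e0 /rho_star !mul0mx addr0.
Qed.
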